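(* Let $A\in\mathbb{C}^{n\times n}$ with $\mathrm{Ind}(A)=k$ be written in the core-EP decomposition $A=U\begin{bmatrix}T&S\\0&N\end{bmatrix}U^*$ (as in the context), and let $m\in\mathbb{N}=\{1,2,\dots\}$. For $\ell\in\mathbb{N}$ put $\tilde{T}_\ell=\sum_{i=0}^{\ell-1}T^iSN^{\ell-1-i}$. Then: (a) $A^{\#_m}=A^\dagger$ if and only if $S=0$ and $N=0$; (b) $A^{\#_m}=A^d$ if and only if $\tilde{T}_mP_{N^m}=T^{m-k}\tilde{T}_k$; (c) $A^{\#_m}=A^{\mathrm{cEP}}$ if and only if $\tilde{T}_mN^m=0$; (d) $A^{\#_m}=A^{d,\dagger}$ if and only if $\tilde{T}_mP_{N^m}=T^{m-k}\tilde{T}_kP_N$; (e) $A^{\#_m}=A^{\mathrm{WC}}$ if and only if $\tilde{T}_mP_{N^m}=T^{m-1}SP_N$; (f) $A^{\#_m}=A^{\mathrm{WG}_m}$ if and only if $\mathcal{N}((N^m)^* )\subseteq\mathcal{N}(\tilde{T}_m)$.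
   Context: Core-EP decomposition: every $A\in\mathbb{C}^{n\times n}$ of index $k$ can be written as $A=U\begin{bmatrix}T&S\\0&N\end{bmatrix}U^*$ with $U$ unitary, $T\in\mathbb{C}^{t\times t}$ nonsingular, $t=\mathrm{rk}(A^k)$, and $N\in\mathbb{C}^{(n-t)\times(n-t)}$ nilpotent of index $k$ (blocks of size zero allowed). The index $\mathrm{Ind}(A)$ is the smallest nonnegative integer $k$ with $\mathcal{R}(A^k)=\mathcal{R}(A^{k+1})$, $A^0=I$. For a matrix $B$: $B^\dagger$ Moore–Penrose inverse, $P_B=BB^\dagger$, $\mathcal{R}(\cdot)$, $\mathcal{N}(\cdot)$ column space and null space. $A^d$ is the Drazin inverse (unique $X$ with $XAX=X$, $AX=XA$, $XA^{k+1}=A^k$). The DMP inverse is $A^{d,\dagger}:=A^dAA^\dagger$. The core-EP inverse $A^{\mathrm{cEP}}$ is the unique $X$ with $XAX=X$ and $\mathcal{R}(X)=\mathcal{R}(X^* )=\mathcal{R}(A^k)$. The WG inverse is $A^{\mathrm{WG}}:=(A^{\mathrm{cEP}})^2A$ and the WC inverse is $A^{\mathrm{WC}}:=A^{\mathrm{WG}}P_A$. For $m\in\mathbb{N}$, the $m$-weak group inverse is $A^{\mathrm{WG}_m}:=(A^{\mathrm{cEP}})^{m+1}A^m$ and the $m$-weak core inverse is $A^{\#_m}:=A^{\mathrm{WG}_m}P_{A^m}$. *)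

(* Defs.v *)
From HB Require Import structures.
From mathcomp Require Import all_boot all_order all_algebra all_field.
From mathcomp Require Import spectral.
From Stdlib Require Import ClassicalEpsilon.

Set Implicit Arguments.
Unset Strict Implicit.
Unset Printing Implicit Defensive.

Import Order.TTheory GRing.Theory Num.Theory.
Local Open Scope ring_scope.
Local Open Scope sesquilinear_scope.


(* Column space of B : 'M_(p,q) is the row space of B^T. *)
Definition colsp_eq p q r (B : 'M[algC]_(p, q)) (C : 'M[algC]_(p, r)) : Prop :=
  (B^T == C^T)%MS.

Definition is_index n (A : 'M[algC]_n) (k : nat) : Prop :=
  colsp_eq (A ^+ k) (A ^+ k.+1) /\
  forall j, (j < k)%N -> ~ colsp_eq (A ^+ j) (A ^+ j.+1).

Definition mxindex n (A : 'M[algC]_n) : nat :=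
  epsilon (inhabits 0%N) (is_index A).

Definition nilp_index n (N : 'M[algC]_n) (k : nat) : Prop :=
  N ^+ k = 0 /\ forall j, (j < k)%N -> N ^+ j <> 0.

Definition is_mpinv p q (A : 'M[algC]_(p, q)) (X : 'M[algC]_(q, p)) : Prop :=
  [/\ A *m X *m A = A, X *m A *m X = X,
      (A *m X) ^t* = A *m X & (X *m A) ^t* = X *m A].

Definition mpinv p q (A : 'M[algC]_(p, q)) : 'M[algC]_(q, p) :=
  epsilon (inhabits 0) (is_mpinv A).

Definition projP p q (B : 'M[algC]_(p, q)) : 'M[algC]_p := B *m mpinv B.

Definition is_drazin n (A X : 'M[algC]_n) : Prop :=
  [/\ X *m A *m X = X, A *m X = X *m A & X *m A ^+ (mxindex A).+1 = A ^+ (mxindex A)].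

Definition drazin n (A : 'M[algC]_n) : 'M[algC]_n :=
  epsilon (inhabits 0) (is_drazin A).

Definition is_coreEP n (A X : 'M[algC]_n) : Prop :=
  [/\ X *m A *m X = X, colsp_eq X (A ^+ mxindex A) & colsp_eq (X ^t*) (A ^+ mxindex A)].

Definition coreEP n (A : 'M[algC]_n) : 'M[algC]_n :=
  epsilon (inhabits 0) (is_coreEP A).

Definition dmp n (A : 'M[algC]_n) : 'M[algC]_n := drazin A *m A *m mpinv A.

Definition wg n (A : 'M[algC]_n) : 'M[algC]_n := coreEP A ^+ 2 *m A.
Definition wc n (A : 'M[algC]_n) : 'M[algC]_n := wg A *m projP A.

Definition wgm n (m : nat) (A : 'M[algC]_n) : 'M[algC]_n :=
  coreEP A ^+ m.+1 *m A ^+ m.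
Definition wcm n (m : nat) (A : 'M[algC]_n) : 'M[algC]_n :=
  wgm m A *m projP (A ^+ m).

Definition Ttil t s (T : 'M[algC]_t) (S : 'M[algC]_(t, s)) (N : 'M[algC]_s)
  (l : nat) : 'M[algC]_(t, s) :=
  \sum_(i < l) T ^+ i *m S *m N ^+ (l.-1 - i).

(* Integer power T^(m-k) of a nonsingular T. *)
Definition mxpowz t (T : 'M[algC]_t) (m k : nat) : 'M[algC]_t :=
  if (k <= m)%N then T ^+ (m - k) else invmx T ^+ (k - m).

(* Main.v *)
Require Import Defs.
From mathcomp Require Import all_boot all_order all_algebra all_field.
From mathcomp Require Import spectral zify.
From Stdlib Require Import ClassicalEpsilon.

Import GRing.Theory Num.Theory.
Local Open Scope ring_scope.
Local Open Scope sesquilinear_scope.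

Set Implicit Arguments.
Unset Strict Implicit.
Unset Printing Implicit Defensive.

Section Adj.
Implicit Types p q r : nat.

Lemma ctM p q r (A : 'M[algC]_(p, q)) (B : 'M[algC]_(q, r)) :
  (A *m B)^t* = B^t* *m A^t*.
Proof. by rewrite trmx_mul map_mxM. Qed.

Lemma ct0 p q : (0 : 'M[algC]_(p, q))^t* = 0.
Proof. by apply/matrixP=> i j; rewrite !mxE conjC0. Qed.

Lemma ct1 p : (1%:M : 'M[algC]_p)^t* = 1%:M.
Proof. by apply/matrixP=> i j; rewrite !mxE rmorph_nat eq_sym. Qed.

Lemma ctD p q (A B : 'M[algC]_(p, q)) : (A + B)^t* = A^t* + B^t*.
Proof. by apply/matrixP=> i j; rewrite !mxE rmorphD. Qed.

Lemma ctN p q (A : 'M[algC]_(p, q)) : (- A)^t* = - A^t*.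
Proof. by apply/matrixP=> i j; rewrite !mxE rmorphN. Qed.

Lemma ctB p q r s (A : 'M[algC]_(p, r)) (B : 'M_(p, s)) (C : 'M_(q, r)) (D : 'M_(q, s)) :
  (block_mx A B C D)^t* = block_mx (A^t*) (C^t*) (B^t*) (D^t*).
Proof. by rewrite tr_block_mx map_block_mx. Qed.

Lemma ctV p (A : 'M[algC]_p) : (invmx A)^t* = invmx (A^t*).
Proof. by rewrite trmx_inv map_invmx. Qed.

Lemma dot_eq0 p (u : 'rV[algC]_p) : (u *m u^t*) 0 0 = 0 -> u = 0.
Proof.
move=> h; apply/eqP; apply: contraT => /dotmx_is_dotmx.
by rewrite dotmxE h Order.POrderTheory.ltxx.
Qed.

End Adj.

Lemma gram_unit r q (G : 'M[algC]_(r, q)) : row_free G -> G *m G^t* \in unitmx.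
Proof.
move=> fG; rewrite -row_free_unit -kermx_eq0.
have -> : kermx (G *m G^t*) = 0; last exact: eqxx.
apply/row_matrixP => i; rewrite row0.
set v := row i _.
have h0 : v *m (G *m G^t*) = 0 by rewrite /v -row_mul mulmx_ker row0.
have h1 : v *m G = 0.
  apply: dot_eq0; rewrite ctM mulmxA -(mulmxA v) h0 mul0mx mxE //.
by apply/eqP; rewrite -(mulmx_free_eq0 _ fG) h1.
Qed.

Lemma mpinv_exists_fr p r q (F : 'M[algC]_(p, r)) (G : 'M[algC]_(r, q)) :
  row_free G -> row_free (F^t*) -> exists X, is_mpinv (F *m G) X.
Proof.
move=> fG fF.
have uG := gram_unit fG.
have uF := gram_unit fF; rewrite trmxCK in uF.
set Kg := G *m G^t* in uG *; set Kf := F^t* *m F in uF *.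
exists (G^t* *m invmx Kg *m invmx Kf *m F^t*).
have hKf : Kf^t* = Kf by rewrite /Kf ctM trmxCK.
have hKg : Kg^t* = Kg by rewrite /Kg ctM trmxCK.
have eAX : F *m G *m (G^t* *m invmx Kg *m invmx Kf *m F^t*) = F *m invmx Kf *m F^t*.
  by rewrite !mulmxA -(mulmxA F G) -/Kg -(mulmxA F Kg) mulmxV // mulmx1.
have eXA : (G^t* *m invmx Kg *m invmx Kf *m F^t*) *m (F *m G) = G^t* *m invmx Kg *m G.
  by rewrite !mulmxA -(mulmxA _ (F^t*) F) -/Kf -(mulmxA _ (invmx Kf)) mulVmx // mulmx1.
split.
- by rewrite eAX !mulmxA -(mulmxA _ (F^t*) F) -/Kf -(mulmxA F) mulVmx // mulmx1.
- by rewrite eXA !mulmxA -(mulmxA _ G (G^t*)) -/Kg -(mulmxA _ Kg) mulmxV // mulmx1.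
- by rewrite eAX !ctM trmxCK ctV hKf !mulmxA.
- by rewrite eXA !ctM trmxCK ctV hKg !mulmxA.
Qed.

Lemma mpinv_exists p q (M : 'M[algC]_(p, q)) : exists X, is_mpinv M X.
Proof.
have := @mpinv_exists_fr _ _ _ (col_base M) (row_base M) (row_base_free M).
rewrite mulmx_base; apply.
by rewrite /row_free mxrank_map mxrank_tr; exact: col_base_full.
Qed.

Lemma mpinvP p q (M : 'M[algC]_(p, q)) : is_mpinv M (mpinv M).
Proof. rewrite /mpinv; exact: epsilon_spec (mpinv_exists M). Qed.

Lemma mpinv_uniq p q (M : 'M[algC]_(p, q)) X Y : is_mpinv M X -> is_mpinv M Y -> X = Y.
Proof.
case=> [h1 h2 h3 h4] [g1 g2 g3 g4].
have eX : X = X *m M *m Y.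
  transitivity (X *m (M *m X)^t*); first by rewrite h3 mulmxA h2.
  transitivity (X *m X^t* *m (M *m Y *m M)^t*); first by rewrite g1 ctM mulmxA.
  transitivity (X *m (M *m X)^t* *m (M *m Y)^t*); first by rewrite !ctM !mulmxA.
  by rewrite h3 g3 !mulmxA h2.
have eY : Y = X *m M *m Y.
  transitivity ((Y *m M)^t* *m Y); first by rewrite g4 g2.
  transitivity ((M *m X *m M)^t* *m Y^t* *m Y); first by rewrite h1 ctM.
  transitivity ((X *m M)^t* *m (Y *m M)^t* *m Y); first by rewrite !ctM !mulmxA.
  by rewrite h4 g4 -!mulmxA (mulmxA Y M Y) g2.
by rewrite eX -eY.
Qed.

Lemma projP_adj p q (M : 'M[algC]_(p, q)) : (projP M)^t* = projP M.
Proof. by case: (mpinvP M). Qed.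

Lemma projP_M p q (M : 'M[algC]_(p, q)) : projP M *m M = M.
Proof. by case: (mpinvP M). Qed.

Lemma projP_char p q (M : 'M[algC]_(p, q)) (P : 'M[algC]_p) (Z : 'M[algC]_(q, p)) :
  P^t* = P -> P *m M = M -> P = M *m Z -> projP M = P.
Proof.
move=> hP hPM hZ.
have e1 : P = projP M *m P by rewrite {2}hZ mulmxA projP_M -hZ.
have e2 : projP M = P *m projP M by rewrite /projP mulmxA hPM.
by rewrite e2 -{1}hP -(projP_adj M) -ctM -e1 hP.
Qed.

Lemma colsp_of p q r (B : 'M[algC]_(p, q)) (C : 'M[algC]_(p, r)) Z W :
  B = C *m Z -> C = B *m W -> colsp_eq B C.
Proof.
move=> eB eC; rewrite /colsp_eq; apply/andP; split.
  by rewrite eB trmx_mul submxMl.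
by rewrite eC trmx_mul submxMl.
Qed.

Lemma colsp_fact p q r (B : 'M[algC]_(p, q)) (C : 'M[algC]_(p, r)) :
  (C^T <= B^T)%MS -> exists Z, C = B *m Z.
Proof.
by case/submxP => D hD; exists D^T; rewrite -[C]trmxK hD trmx_mul trmxK.
Qed.

Lemma coreEP_uniq n (A X Y : 'M[algC]_n) : is_coreEP A X -> is_coreEP A Y -> X = Y.
Proof.
case=> hX /andP[cX1 cX2] /andP[dX1 dX2] [hY /andP[cY1 cY2] /andP[dY1 dY2]].
have [Z eZ] : exists Z, Y = X *m Z.
  by apply: colsp_fact; exact: submx_trans cY1 cX2.
have [W eW] : exists W, X^t* = Y^t* *m W.
  by apply: colsp_fact; exact: submx_trans dX1 dY2.
have eW' : X = W^t* *m Y by rewrite -[X]trmxCK eW ctM trmxCK.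
have e1 : X *m A *m Y = Y by rewrite {1}eZ mulmxA hX -eZ.
have e2 : X *m A *m Y = X by rewrite {1}eW' -!mulmxA (mulmxA Y A Y) hY -eW'.
by rewrite -e2.
Qed.

Lemma drazin_uniq n k (A X Y : 'M[algC]_n) :
  X *m A *m X = X -> A *m X = X *m A -> X *m A ^+ k.+1 = A ^+ k ->
  Y *m A *m Y = Y -> A *m Y = Y *m A -> Y *m A ^+ k.+1 = A ^+ k -> X = Y.
Proof.
rewrite !mulmxE => h1 h2 h3 g1 g2 g3.
have pw : forall (Z : 'M[algC]_n), Z * A * Z = Z -> A * Z = Z * A ->
    forall j, Z = Z ^+ j.+1 * A ^+ j.
  move=> Z z1 z2; elim=> [|j IH]; first by rewrite expr0 expr1 mulr1.
  have zz : Z * Z * A = Z by rewrite -mulrA -z2 mulrA z1.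
  transitivity (Z ^+ j * (Z * Z * A) * A ^+ j); first by rewrite zz -exprSr -IH.
  by rewrite [Z ^+ j.+2]exprSr [Z ^+ j.+1]exprSr exprS !mulrA.
have cX : forall j, A ^+ j * X = X * A ^+ j.
  by move=> j; apply/esym/commrX; exact/esym/h2.
have cY : forall j, A ^+ j * Y = Y * A ^+ j.
  by move=> j; apply/esym/commrX; exact/esym/g2.
have e : X ^+ k.+1 * A ^+ k.+1 = X * A by rewrite [A ^+ k.+1]exprSr mulrA -(pw X h1 h2 k).
have eX : X = X * A * Y.
  by rewrite {1}(pw X h1 h2 k) -g3 -cY mulrA e.
have cYk : A ^+ k * Y ^+ k.+1 = Y ^+ k.+1 * A ^+ k.
  exact: commrX (cY k).
have eY : Y = X * A * Y.
  rewrite {1}(pw Y g1 g2 k) -cYk -h3 [A ^+ k.+1]exprS !mulrA.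
  by rewrite -(mulrA (X * A)) cYk -(pw Y g1 g2 k).
by rewrite eX -eY.
Qed.

Lemma mxindex_eqk n (A : 'M[algC]_n) k : is_index A k -> mxindex A = k.
Proof.
move=> H; have H' : is_index A (mxindex A).
  by rewrite /mxindex; apply: epsilon_spec; exists k.
case: H H' => h1 h2 [h1' h2'].
case: (ltngtP (mxindex A) k) => // lt.
  by case: (h2 _ lt h1').
by case: (h2' _ lt h1).
Qed.

Lemma drazin_eq n (A X : 'M[algC]_n) : is_drazin A X -> drazin A = X.
Proof.
move=> hX; have hD : is_drazin A (drazin A).
  by rewrite /drazin; apply: epsilon_spec; exists X.
case: hX hD => h1 h2 h3 [g1 g2 g3].
exact: (drazin_uniq g1 g2 g3 h1 h2 h3).
Qed.

Lemma coreEP_eq n (A X : 'M[algC]_n) : is_coreEP A X -> coreEP A = X.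
Proof.
move=> hX; have hD : is_coreEP A (coreEP A).
  by rewrite /coreEP; apply: epsilon_spec; exists X.
exact: coreEP_uniq hD hX.
Qed.

Lemma mpinv_eq p q (A : 'M[algC]_(p, q)) X : is_mpinv A X -> mpinv A = X.
Proof. by move=> hX; exact: mpinv_uniq (mpinvP A) hX. Qed.

Definition cj n (U X : 'M[algC]_n) := U *m X *m U^t*.

Lemma unit_l n (U : 'M[algC]_n) : U \is unitarymx -> U *m U^t* = 1%:M.
Proof. by move/unitarymxP. Qed.

Lemma unit_r n (U : 'M[algC]_n) : U \is unitarymx -> U^t* *m U = 1%:M.
Proof. by move=> hU; rewrite -invmx_unitary // mulVmx // unitarymx_unit. Qed.

Lemma cjM n (U X Y : 'M[algC]_n) : U \is unitarymx -> cj U X *m cj U Y = cj U (X *m Y).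
Proof.
by move=> hU; rewrite /cj !mulmxA -(mulmxA _ (U^t*) U) unit_r // mulmx1.
Qed.

Lemma cj_inj n (U X Y : 'M[algC]_n) : U \is unitarymx -> cj U X = cj U Y -> X = Y.
Proof.
move=> hU e.
have : U^t* *m cj U X *m U = U^t* *m cj U Y *m U by rewrite e.
by rewrite /cj !mulmxA !unit_r // !mul1mx -!mulmxA !unit_r // !mulmx1.
Qed.

Lemma cj_adj n (U X : 'M[algC]_n) : (cj U X)^t* = cj U (X^t*).
Proof. by rewrite /cj !ctM trmxCK mulmxA. Qed.

Lemma cj_pow n (U X : 'M[algC]_n) j : U \is unitarymx -> (cj U X) ^+ j = cj U (X ^+ j).
Proof.
move=> hU; elim: j => [|j IH].
  by rewrite !expr0 /cj mulmx1 unit_l.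
by rewrite !exprS -!mulmxE IH cjM.
Qed.

Lemma cj0 n (U : 'M[algC]_n) : cj U 0 = 0.
Proof. by rewrite /cj mulmx0 mul0mx. Qed.

Lemma Ttil0 t s (T : 'M[algC]_t) S (N : 'M[algC]_s) : Ttil T S N 0 = 0.
Proof. by rewrite /Ttil big_ord0. Qed.

Lemma TtilS t s (T : 'M[algC]_t) S (N : 'M[algC]_s) j :
  Ttil T S N j.+1 = T *m Ttil T S N j + S *m N ^+ j.
Proof.
rewrite /Ttil big_ord_recl /= expr0 mul1mx subn0 addrC mulmx_sumr; congr (_ + _).
apply: eq_bigr => i _; rewrite /bump /= add1n exprS -mulmxE !mulmxA.
by have -> : (j - i.+1 = j.-1 - i)%N by lia.
Qed.

Lemma block_pow t s (T : 'M[algC]_t) S (N : 'M[algC]_s) j :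
  (block_mx T S 0 N) ^+ j = block_mx (T ^+ j) (Ttil T S N j) 0 (N ^+ j).
Proof.
elim: j => [|j IH].
  by rewrite !expr0 Ttil0 -scalar_mx_block.
rewrite exprS -mulmxE IH mulmx_block TtilS !mul0mx !mulmx0 !addr0 !add0r.
by rewrite !exprS -!mulmxE.
Qed.

Lemma Ttil_S0 t s (T : 'M[algC]_t) (N : 'M[algC]_s) j : Ttil T 0 N j = 0.
Proof. by rewrite /Ttil big1 // => i _; rewrite mulmx0 mul0mx. Qed.

Lemma powK t (T : 'M[algC]_t) j : T \in unitmx ->
  T ^+ j *m invmx T ^+ j = 1%:M /\ invmx T ^+ j *m T ^+ j = 1%:M.
Proof.
move=> uT; elim: j => [|j [IH1 IH2]]; first by rewrite !expr0 mulmx1.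
split.
  by rewrite exprS exprSr -!mulmxE mulmxA -(mulmxA T) IH1 mulmx1 mulmxV.
by rewrite exprS exprSr -!mulmxE mulmxA -(mulmxA (invmx T)) IH2 mulmx1 mulVmx.
Qed.

Lemma mxpowz_eq t (T : 'M[algC]_t) a b : T \in unitmx ->
  mxpowz T a b = T ^+ a.+1 *m invmx T ^+ b.+1.
Proof.
move=> uT; rewrite /mxpowz; case: leqP => hab.
  have -> : a.+1 = (a - b + b.+1)%N by lia.
  by rewrite exprD -mulmxE -mulmxA (powK b.+1 uT).1 mulmx1.
have -> : b.+1 = (a.+1 + (b - a))%N by lia.
by rewrite (exprD (invmx T)) -mulmxE mulmxA (powK a.+1 uT).1 mul1mx.
Qed.

Lemma powlemma t s (T : 'M[algC]_t) a b (Z W : 'M[algC]_(t, s)) : T \in unitmx ->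
  (invmx T ^+ a.+1 *m Z = invmx T ^+ b.+1 *m W <-> Z = mxpowz T a b *m W).
Proof.
move=> uT; rewrite mxpowz_eq //; split => e.
  by rewrite -[Z]mul1mx -(powK a.+1 uT).1 -mulmxA e !mulmxA.
by rewrite e !mulmxA (powK a.+1 uT).2 mul1mx.
Qed.

Lemma mxpowz_1 t (T : 'M[algC]_t) m : (0 < m)%N -> mxpowz T m 1 = T ^+ m.-1.
Proof. by move=> hm; rewrite /mxpowz hm subn1. Qed.

Lemma blk_eq n1 n2 (U : 'M[algC]_(n1 + n2)) (Ti : 'M[algC]_n1) X Y :
  U \is unitarymx ->
  (cj U (block_mx Ti X 0 0) = cj U (block_mx Ti Y 0 0) <-> X = Y).
Proof.
move=> hU; split => [/(cj_inj hU)/eq_block_mx [] // | -> //].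
Qed.

Lemma colmul p q r (M : 'M[algC]_(p, q)) (Q : 'M[algC]_(q, r)) j :
  M *m col j Q = col j (M *m Q).
Proof. by apply/matrixP => a b; rewrite !mxE; apply: eq_bigr => l _; rewrite !mxE. Qed.

Ltac bsimp := repeat progress rewrite ?mulmx_block ?mul0mx ?mulmx0 ?addr0 ?add0r.

Lemma cancelTi t s (T : 'M[algC]_t) a (Z W : 'M[algC]_(t, s)) : T \in unitmx ->
  (invmx T ^+ a.+1 *m Z = invmx T ^+ a.+1 *m W <-> Z = W).
Proof.
move=> uT; rewrite powlemma // /mxpowz leqnn subnn expr0 mul1mx //.
Qed.

Unset Implicit Arguments.

Theorem theorem7p1 (t s k m : nat) (A U : 'M[algC]_(t + s))
  (T : 'M[algC]_t) (S : 'M[algC]_(t, s)) (N : 'M[algC]_s) :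
  is_index A k ->
  U \is unitarymx ->
  T \in unitmx ->
  t = \rank (A ^+ k) ->
  nilp_index N k ->
  A = U *m block_mx T S 0 N *m U ^t* ->
  (0 < m)%N ->
  (wcm m A = mpinv A <-> (S = 0 /\ N = 0)) /\
      (wcm m A = drazin A <->
        Ttil T S N m *m projP (N ^+ m) = mxpowz T m k *m Ttil T S N k) /\
      (wcm m A = coreEP A <-> Ttil T S N m *m N ^+ m = 0) /\
      (wcm m A = dmp A <->
        Ttil T S N m *m projP (N ^+ m) = mxpowz T m k *m Ttil T S N k *m projP N) /\
      (wcm m A = wc A <->
        Ttil T S N m *m projP (N ^+ m) = T ^+ m.-1 *m S *m projP N) /\
      (wcm m A = wgm m A <->
        (forall x : 'cV[algC]_s, (N ^+ m) ^t* *m x = 0 -> Ttil T S N m *m x = 0)).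
Proof.
move=> hidx hU uT _ [Nk _] hA hm.
have hk := mxindex_eqk hidx.
set Ti := invmx T.
have TTi : T *m Ti = 1%:M by exact: mulmxV.
have TiT : Ti *m T = 1%:M by exact: mulVmx.
have hA' : A = cj U (block_mx T S 0 N) by [].
have hAp : forall j, A ^+ j = cj U (block_mx (T ^+ j) (Ttil T S N j) 0 (N ^+ j)).
  by move=> j; rewrite hA' cj_pow // block_pow.
have hP : forall j, projP (A ^+ j) = cj U (block_mx 1%:M 0 0 (projP (N ^+ j))).
  move=> j; rewrite hAp.
  apply: (projP_char (Z := cj U (block_mx (Ti ^+ j)
            (- (Ti ^+ j *m Ttil T S N j *m mpinv (N ^+ j))) 0 (mpinv (N ^+ j))))).
  - by rewrite cj_adj ctB ct1 !ct0 projP_adj.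
  - rewrite cjM // mulmx_block !mul0mx !mulmx0 !mul1mx !addr0 !add0r projP_M //.
  - rewrite cjM // mulmx_block !mul0mx !mulmx0 !addr0 !add0r mulmxN !mulmxA.
    by rewrite (powK j uT).1 mul1mx addNr.
have Nk1 : N ^+ k.+1 = 0 by rewrite exprSr Nk mul0r.
have TkTi : T ^+ k *m Ti ^+ k.+1 = Ti.
  by rewrite [Ti ^+ k.+1]exprSr -mulmxE mulmxA (powK k uT).1 mul1mx.
have TiTk : Ti ^+ k.+1 *m T ^+ k = Ti.
  by rewrite [Ti ^+ k.+1]exprS -mulmxE -mulmxA (powK k uT).2 mulmx1.
have TiTk1 : Ti *m T ^+ k.+1 = T ^+ k.
  by rewrite exprS -mulmxE mulmxA TiT mul1mx.
have hCEP : coreEP A = cj U (block_mx Ti 0 0 0).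
  apply: coreEP_eq; rewrite /is_coreEP hk; split.
  - by rewrite hA' !cjM //; bsimp; rewrite TiT mul1mx.
  - rewrite (hAp k) Nk.
    apply: (colsp_of (Z := cj U (block_mx (Ti ^+ k.+1) 0 0 0))
                     (W := cj U (block_mx (T ^+ k.+1) (T *m Ttil T S N k) 0 0))).
      by rewrite cjM //; bsimp; rewrite TkTi.
    by rewrite cjM //; bsimp; rewrite mulmxA TiT mul1mx TiTk1.
  - rewrite hAp Nk cj_adj ctB !ct0.
    have e1 : Ti^t* *m T^t* = 1%:M by rewrite -ctM TTi ct1.
    have e2 : T^t* *m Ti^t* = 1%:M by rewrite -ctM TiT ct1.
    apply: (colsp_of (W := cj U (block_mx (T^t* *m T ^+ k) (T^t* *m Ttil T S N k) 0 0))
                     (Z := cj U (block_mx (Ti ^+ k *m Ti^t*) 0 0 0))).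
      by rewrite cjM //; bsimp; rewrite mulmxA (powK k uT).1 mul1mx.
    by rewrite cjM //; bsimp; rewrite !mulmxA e1 !mul1mx.
have eTt : T *m Ttil T S N k = T ^+ k *m S + Ttil T S N k *m N.
  have e : block_mx T S 0 N * block_mx T S 0 N ^+ k =
           block_mx T S 0 N ^+ k * block_mx T S 0 N by rewrite -exprS exprSr.
  rewrite !block_pow -!mulmxE in e; move: e; bsimp.
  case/eq_block_mx => _ e _ _.
  by move: e; rewrite Nk mulmx0 addr0.
have hD : drazin A = cj U (block_mx Ti (Ti ^+ k.+1 *m Ttil T S N k) 0 0).
  apply: drazin_eq; rewrite /is_drazin hk; split.
  - by rewrite hA' !cjM //; bsimp; rewrite TiT !mul1mx.
  - rewrite hA' !cjM //; bsimp; congr (cj U (block_mx _ _ 0 0)).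
      by rewrite TTi TiT.
    transitivity (Ti ^+ k.+1 *m (T *m Ttil T S N k)).
      rewrite !mulmxA; congr (_ *m _).
      by rewrite [Ti ^+ k.+1]exprS -mulmxE mulmxA TTi mul1mx mulmxE -exprS exprSr -mulrA -mulmxE TiT mulmx1.
    by rewrite eTt mulmxDr !mulmxA TiTk.
  - rewrite (hAp k.+1) (hAp k) Nk Nk1 TtilS Nk mulmx0 addr0 cjM //; bsimp.
    by rewrite TiTk1 mulmxA TiT mul1mx.
have hWGM : wgm m A = cj U (block_mx Ti (Ti ^+ m.+1 *m Ttil T S N m) 0 0).
  rewrite /wgm hCEP cj_pow // block_pow Ttil_S0 expr0n /= hAp cjM //; bsimp.
  by rewrite [Ti ^+ m.+1]exprS -mulmxE -(mulmxA Ti (Ti ^+ m) (T ^+ m)) (powK m uT).2 mulmx1.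
have hWCM : wcm m A = cj U (block_mx Ti (Ti ^+ m.+1 *m Ttil T S N m *m projP (N ^+ m)) 0 0).
  by rewrite /wcm hWGM hP cjM //; bsimp; rewrite mulmx1.
have hPA : projP A = cj U (block_mx 1%:M 0 0 (projP N)).
  by have := hP 1%N; rewrite !expr1.
have hWC : wc A = cj U (block_mx Ti (Ti ^+ 2 *m S *m projP N) 0 0).
  rewrite /wc /wg hCEP cj_pow // block_pow Ttil_S0 expr0n /= hA' !cjM // -hA' hPA; bsimp.
  rewrite cjM //; bsimp; rewrite mulmx1.
  by rewrite expr2 -mulmxE -(mulmxA Ti Ti T) TiT mulmx1.
have hDMP : dmp A = cj U (block_mx Ti (Ti ^+ k.+1 *m Ttil T S N k *m projP N) 0 0).
  by rewrite /dmp -mulmxA -/(projP A) hD hPA cjM //; bsimp; rewrite mulmx1.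
split.
  split.
    move=> e; have hM := mpinvP A; rewrite -e hWCM in hM.
    case: hM => h1 _ _ h4.
    rewrite hA' !cjM // in h1; move/(cj_inj hU): h1; bsimp.
    case/eq_block_mx => _ _ _ eN.
    rewrite hA' !cjM // cj_adj in h4; move/(cj_inj hU): h4; bsimp.
    rewrite ctB !ct0; case/eq_block_mx => _ eS _ _.
    move: eS; rewrite -eN mulmx0 addr0 => eS.
    split => //.
    by rewrite -[S]mul1mx -TTi -mulmxA -eS mulmx0.
  case=> eS eN; subst S N.
  rewrite hWCM Ttil_S0 ?mulmx0 ?mul0mx ?mulmx0.
  symmetry; apply: mpinv_eq; rewrite hA'; split.
  - by rewrite !cjM //; bsimp; rewrite TTi mul1mx.
  - by rewrite !cjM //; bsimp; rewrite TiT mul1mx.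
  - by rewrite !cjM //; bsimp; rewrite TTi cj_adj ctB ct1 !ct0.
  - by rewrite !cjM //; bsimp; rewrite TiT cj_adj ctB ct1 !ct0.
split.
  by rewrite hWCM hD blk_eq // -mulmxA powlemma.
split.
  rewrite hWCM hCEP blk_eq // -mulmxA; split => h.
    have h' : Ttil T S N m *m projP (N ^+ m) = 0.
      by apply/(@cancelTi _ _ T m _ _ uT); rewrite h mulmx0.
    by rewrite -(projP_M (N ^+ m)) mulmxA h' mul0mx.
  by rewrite /projP (mulmxA (Ttil T S N m)) h mul0mx mulmx0.
split.
  by rewrite hWCM hDMP blk_eq // -mulmxA -(mulmxA (Ti ^+ k.+1)) powlemma // (mulmxA (mxpowz T m k)).
split.
  by rewrite hWCM hWC blk_eq // -mulmxA -(mulmxA (Ti ^+ 2)) (@powlemma _ _ _ _ 1) // mxpowz_1 // (mulmxA (T ^+ m.-1)).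
rewrite hWCM hWGM blk_eq // -mulmxA cancelTi //; split => h.
  move=> x hx.
  have Px : projP (N ^+ m) *m x = 0.
    by rewrite -projP_adj /projP ctM -mulmxA hx mulmx0.
  by rewrite -{1}h -mulmxA Px mulmx0.
have e : (N ^+ m)^t* *m projP (N ^+ m) = (N ^+ m)^t*.
  by rewrite -{1}(projP_adj (N ^+ m)) -ctM projP_M.
have hQ : Ttil T S N m *m (1%:M - projP (N ^+ m)) = 0.
  apply/matrixP => i j.
  have := h (col j (1%:M - projP (N ^+ m))).
  rewrite !colmul mulmxBr mulmx1 e subrr col0 => /(_ erefl) /matrixP /(_ i 0).
  by rewrite !mxE.
by apply/eqP; rewrite eq_sym -subr_eq0 -{1}(mulmx1 (Ttil T S N m)) -mulmxBr hQ.
Qed.
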